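(* Let $0\le k<n$ and let $\Phi:\mathfrak{B}([n])^{op}\to\mathbf{Gpd}$ be a contravariant functor. Consider the forgetful (restriction) functor $\gamma_k:\operatorname{2lim}_{\mathfrak{B}([n])}\Phi\to\operatorname{2lim}_{\mathfrak{B}([n],k)}\Phi$. Then: (i) $\gamma_k$ is faithful; (ii) if $k\le n-2$, $\gamma_k$ is full and faithful; (iii) if $k\le n-3$, $\gamma_k$ is an equivalence of categories.
   Context: $[n]=\{1,\dots,n\}$; $\mathfrak{B}([n])$ is the poset of proper subsets of $[n]$ ordered by inclusion, and $\mathfrak{B}([n],k)$ is the subposet of proper subsets $S\subsetneq[n]$ with $|S|\ge k$; $\Phi$ on $\mathfrak{B}([n],k)$ denotes the restriction. For $U\subseteq V$, $\Phi_{U,V}:\Phi(V)\to\Phi(U)$. For a functor $\Psi:I^{op}\to\mathbf{Gpd}$ on a poset, the 2-limit $\operatorname{2lim}\Psi$ is the groupoid whose objects are families $(a_U,\alpha_{U,V})$ with $a_U\in\Psi(U)$ and isomorphisms $\alpha_{U,V}:\Psi_{U,V}(a_V)\to a_U$ for $U\le V$ satisfying $\alpha_{U,U}=\mathrm{id}$ and $\alpha_{U,W}=\alpha_{U,V}\circ\Psi_{U,V}(\alpha_{V,W})$ for $U\le V\le W$, and whose morphisms are families $g_U:a_U\to b_U$ with $g_U\circ\alpha_{U,V}=\beta_{U,V}\circ\Psi_{U,V}(g_V)$. *)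

(* Defs.v *)
From Stdlib Require Import FunctionalExtensionality ProofIrrelevance.
From mathcomp Require Import all_boot.
Set Implicit Arguments. Unset Strict Implicit. Unset Printing Implicit Defensive.

Record Cat := {
  cobj :> Type;
  chom : cobj -> cobj -> Type;
  cid : forall x, chom x x;
  ccomp : forall x y z, chom y z -> chom x y -> chom x z;
  ccompA : forall x y z w (h : chom z w) (g : chom y z) (f : chom x y),
     ccomp h (ccomp g f) = ccomp (ccomp h g) f;
  ccomp1l : forall x y (f : chom x y), ccomp (cid y) f = f;
  ccomp1r : forall x y (f : chom x y), ccomp f (cid x) = f }.
Arguments chom {c}. Arguments cid {c}. Arguments ccomp {c x y z}.

Definition is_iso (C : Cat) (x y : C) (f : chom x y) : Prop :=
  exists g : chom y x, ccomp g f = cid x /\ ccomp f g = cid y.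

Record Gpd := { gcat :> Cat; gisoP : forall (x y : gcat) (f : chom x y), is_iso f }.

Record Functor (C D : Cat) := {
  fobj :> C -> D;
  fmap : forall x y, chom x y -> chom (fobj x) (fobj y);
  fmap_id : forall x, fmap (cid x) = cid (fobj x);
  fmap_comp : forall x y z (g : chom y z) (f : chom x y),
     fmap (ccomp g f) = ccomp (fmap g) (fmap f) }.
Arguments fmap {C D} _ {x y}.

Definition faithful (C D : Cat) (F : Functor C D) : Prop :=
  forall (x y : C) (f g : chom x y), fmap F f = fmap F g -> f = g.

Definition full (C D : Cat) (F : Functor C D) : Prop :=
  forall (x y : C) (h : chom (F x) (F y)), exists f : chom x y, fmap F f = h.

Definition equivalence (C D : Cat) (F : Functor C D) : Prop :=
  exists G : Functor D C,
    (exists eta : forall x : C, chom x (G (F x)),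
        (forall x, is_iso (eta x)) /\
        (forall x y (f : chom x y), ccomp (eta y) f = ccomp (fmap G (fmap F f)) (eta x)))
    /\
    (exists eps : forall y : D, chom (F (G y)) y,
        (forall y, is_iso (eps y)) /\
        (forall x y (f : chom x y), ccomp (eps y) (fmap F (fmap G f)) = ccomp f (eps x))).

Definition hcast (C : Cat) (x x' y y' : C) (ex : x = x') (ey : y = y')
  (f : chom x y) : chom x' y' :=
  match ex in _ = x1 return chom x1 y' with
  | erefl => match ey in _ = y1 return chom x y1 with erefl => f end end.

(* ---------- strict functors Phi : B([n])^op -> Gpd ----------
   B([n]) = proper subsets of [n] = 'I_n.  Phi is given on all subsets, but
   the functor axioms are only imposed on proper subsets, and the 2-limits
   below only look at proper subsets, so the values at [set: 'I_n] are
   irrelevant. pres h : Phi V -> Phi U for h : U \subset V is Phi_{U,V}. *)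
Record PFun (n : nat) := {
  pobj : {set 'I_n} -> Gpd;
  pres : forall U V : {set 'I_n}, U \subset V -> Functor (pobj V) (pobj U);
  pres_id_obj : forall (U : {set 'I_n}) (h : U \subset U), U \proper [set: 'I_n] ->
     forall a : pobj U, pres h a = a;
  pres_id_hom : forall (U : {set 'I_n}) (h : U \subset U) (pU : U \proper [set: 'I_n])
     (a b : pobj U) (f : chom a b),
     fmap (pres h) f = hcast (esym (pres_id_obj h pU a)) (esym (pres_id_obj h pU b)) f;
  pres_comp_obj : forall (U V W : {set 'I_n}) (hUV : U \subset V) (hVW : V \subset W) (hUW : U \subset W),
     W \proper [set: 'I_n] -> forall a : pobj W, pres hUV (pres hVW a) = pres hUW a;
  pres_comp_hom : forall (U V W : {set 'I_n}) (hUV : U \subset V) (hVW : V \subset W) (hUW : U \subset W)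
     (pW : W \proper [set: 'I_n]) (a b : pobj W) (f : chom a b),
     fmap (pres hUV) (fmap (pres hVW) f) =
     hcast (esym (pres_comp_obj hUV hVW hUW pW a)) (esym (pres_comp_obj hUV hVW hUW pW b))
           (fmap (pres hUW) f) }.

(* B([n],k): proper subsets with at least k elements; B([n]) = B([n],0) *)
Definition Bpred (n k : nat) (U : {set 'I_n}) : bool :=
  (U \proper [set: 'I_n]) && (k <= #|U|).

Lemma Bpred_proper n k (U : {set 'I_n}) : Bpred k U -> U \proper [set: 'I_n].
Proof. by case/andP. Qed.

Lemma Bpred_k0 n k (U : {set 'I_n}) : Bpred k U -> Bpred 0 U.
Proof. by rewrite /Bpred; case/andP=> -> _. Qed.

Section Lim.
Variables (n k : nat) (Phi : PFun n).

Record LObj := {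
  la : forall U, Bpred k U -> pobj Phi U;
  lal : forall U V (pU : Bpred k U) (pV : Bpred k V) (h : U \subset V),
     chom (pres Phi h (la pV)) (la pU);
  lal_id : forall U (pU : Bpred k U) (h : U \subset U),
     lal pU pU h = hcast (esym (pres_id_obj h (Bpred_proper pU) (la pU))) erefl (cid (la pU));
  lal_comp : forall U V W (pU : Bpred k U) (pV : Bpred k V) (pW : Bpred k W)
     (hUV : U \subset V) (hVW : V \subset W) (hUW : U \subset W),
     lal pU pW hUW =
     hcast (pres_comp_obj hUV hVW hUW (Bpred_proper pW) (la pW)) erefl
           (ccomp (lal pU pV hUV) (fmap (pres Phi hUV) (lal pV pW hVW))) }.

Record LHom (A B : LObj) := {
  lg : forall U (pU : Bpred k U), chom (la A pU) (la B pU);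
  lgP : forall U V (pU : Bpred k U) (pV : Bpred k V) (h : U \subset V),
     ccomp (lg pU) (lal A pU pV h) = ccomp (lal B pU pV h) (fmap (pres Phi h) (lg pV)) }.

Lemma LHom_eq A B (f g : LHom A B) :
  (forall U (pU : Bpred k U), lg f pU = lg g pU) -> f = g.
Proof.
case: f => f fP; case: g => g gP /= H.
have E : f = g.
  apply: functional_extensionality_dep => U.
  apply: functional_extensionality_dep => pU; exact: H.
subst g; f_equal; apply: proof_irrelevance.
Qed.

Definition LHom_id (A : LObj) : LHom A A.
Proof.
refine {| lg := fun U pU => cid (la A pU) |}.
by move=> U V pU pV h; rewrite fmap_id ccomp1l ccomp1r.
Defined.

Definition LHom_comp (A B C : LObj) (g : LHom B C) (f : LHom A B) : LHom A C.
Proof.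
refine {| lg := fun U pU => ccomp (lg g pU) (lg f pU) |}.
move=> U V pU pV h.
by rewrite -ccompA (lgP f) ccompA (lgP g) -ccompA -fmap_comp.
Defined.

Definition lim : Cat.
Proof.
refine {| cobj := LObj; chom := LHom; cid := LHom_id; ccomp := LHom_comp |}.
- by move=> *; apply: LHom_eq => U pU /=; rewrite ccompA.
- by move=> *; apply: LHom_eq => U pU /=; rewrite ccomp1l.
- by move=> *; apply: LHom_eq => U pU /=; rewrite ccomp1r.
Defined.

End Lim.

Section Gamma.
Variables (n k : nat) (Phi : PFun n).

Definition gamma_obj (A : lim 0 Phi) : lim k Phi.
Proof.
refine {| la := fun U pU => la A (Bpred_k0 pU);
          lal := fun U V pU pV h => lal A (Bpred_k0 pU) (Bpred_k0 pV) h |}.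
- move=> U pU h; rewrite (lal_id A).
  by rewrite (eq_irrelevance (Bpred_proper (Bpred_k0 pU)) (Bpred_proper pU)).
- move=> U V W pU pV pW hUV hVW hUW; rewrite (lal_comp A _ (Bpred_k0 pV) _ hUV hVW).
  by rewrite (eq_irrelevance (Bpred_proper (Bpred_k0 pW)) (Bpred_proper pW)).
Defined.

Definition gamma_hom (A B : lim 0 Phi) (f : chom A B) : chom (gamma_obj A) (gamma_obj B).
Proof.
refine {| lg := fun U pU => lg f (Bpred_k0 pU) : chom (la (gamma_obj A) pU) (la (gamma_obj B) pU) |}.
by move=> U V pU pV h; exact: (lgP f).
Defined.

Definition gamma : Functor (lim 0 Phi) (lim k Phi).
Proof.
refine {| fobj := gamma_obj; fmap := gamma_hom |}.
- by move=> A; apply: LHom_eq.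
- by move=> A B C g f; apply: LHom_eq.
Defined.

End Gamma.

(* Main.v *)
From Stdlib Require Import FunctionalExtensionality ProofIrrelevance ClassicalEpsilon.
Require Import Defs.
From mathcomp Require Import all_boot zify.
Set Implicit Arguments. Unset Strict Implicit. Unset Printing Implicit Defensive.

Definition eqh (C : Cat) (x y : C) (e : x = y) : chom x y :=
  match e in _ = y0 return chom x y0 with erefl => cid x end.

Lemma eqh_pi (C : Cat) (x y : C) (e e' : x = y) : eqh e = eqh e'.
Proof. by rewrite (proof_irrelevance _ e e'). Qed.

Lemma eqh_id (C : Cat) (x : C) (e : x = x) : eqh e = cid x.
Proof. by rewrite (proof_irrelevance _ e erefl). Qed.

Lemma eqh_comp (C : Cat) (x y z : C) (e1 : x = y) (e2 : y = z) :
  ccomp (eqh e2) (eqh e1) = eqh (etrans e1 e2).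
Proof. by case: _ / e2; case: _ / e1 => /=; rewrite ccomp1l. Qed.

Lemma eqh_compA (C : Cat) (w x y z : C) (e1 : x = y) (e2 : y = z) (f : chom w x) :
  ccomp (eqh e2) (ccomp (eqh e1) f) = ccomp (eqh (etrans e1 e2)) f.
Proof. by rewrite ccompA eqh_comp. Qed.

Lemma fmap_eqh (C D : Cat) (F : Functor C D) (x y : C) (e : x = y) :
  fmap F (eqh e) = eqh (f_equal F e).
Proof. by case: _ / e => /=; rewrite fmap_id. Qed.

Lemma hcastE (C : Cat) (x x' y y' : C) (ex : x = x') (ey : y = y') (f : chom x y) :
  hcast ex ey f = ccomp (eqh ey) (ccomp f (eqh (esym ex))).
Proof. by case: _ / ex; case: _ / ey => /=; rewrite ccomp1r ccomp1l. Qed.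

Lemma eqh_iso (C : Cat) (x y : C) (e : x = y) : is_iso (eqh e).
Proof. case: _ / e; exists (cid x); by rewrite ccomp1l. Qed.

Definition cinv (C : Cat) (x y : C) (f : chom x y) (H : is_iso f) : chom y x :=
  proj1_sig (constructive_indefinite_description _ H).

Lemma cinvL (C : Cat) (x y : C) (f : chom x y) (H : is_iso f) : ccomp (cinv H) f = cid x.
Proof. rewrite /cinv; case: constructive_indefinite_description => g [] //. Qed.
Lemma cinvR (C : Cat) (x y : C) (f : chom x y) (H : is_iso f) : ccomp f (cinv H) = cid y.
Proof. rewrite /cinv; case: constructive_indefinite_description => g [] //. Qed.

Lemma iso_cancelr (C : Cat) (x y z : C) (i : chom x y) (a b : chom y z) :
  is_iso i -> ccomp a i = ccomp b i -> a = b.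
Proof.
case=> j [_ H2] E.
by rewrite -(ccomp1r a) -(ccomp1r b) -H2 !ccompA E.
Qed.

Lemma iso_cancell (C : Cat) (x y z : C) (i : chom y z) (a b : chom x y) :
  is_iso i -> ccomp i a = ccomp i b -> a = b.
Proof.
case=> j [H1 _] E.
by rewrite -(ccomp1l a) -(ccomp1l b) -H1 -!ccompA E.
Qed.

Lemma iso_comp (C : Cat) (x y z : C) (g : chom y z) (f : chom x y) :
  is_iso g -> is_iso f -> is_iso (ccomp g f).
Proof.
case=> g' [g1 g2] [f' [f1 f2]]; exists (ccomp f' g'); split.
- by rewrite -ccompA (ccompA g') g1 ccomp1l.
- by rewrite -ccompA (ccompA f) f2 ccomp1l.
Qed.

Lemma cinv_iso (C : Cat) (x y : C) (f : chom x y) (H : is_iso f) : is_iso (cinv H).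
Proof. exists f; by rewrite cinvL cinvR. Qed.

Lemma fmap_iso (C D : Cat) (F : Functor C D) (x y : C) (f : chom x y) :
  is_iso f -> is_iso (fmap F f).
Proof.
case=> g [g1 g2]; exists (fmap F g); by rewrite -!fmap_comp g1 g2 !fmap_id.
Qed.

Lemma inv_uniq (C : Cat) (x y : C) (f : chom x y) (g : chom y x) (H : is_iso f) :
  ccomp g f = cid x -> g = cinv H.
Proof. move=> E; apply: (@iso_cancelr _ _ _ _ f) => //; by rewrite E cinvL. Qed.

Lemma fmap_cinv (C D : Cat) (F : Functor C D) (x y : C) (f : chom x y) (H : is_iso f)
  (H' : is_iso (fmap F f)) : fmap F (cinv H) = cinv H'.
Proof. apply: inv_uniq; by rewrite -fmap_comp cinvL fmap_id. Qed.

Lemma cinv_pi (C : Cat) (x y : C) (f : chom x y) (H H' : is_iso f) : cinv H = cinv H'.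
Proof. by rewrite (proof_irrelevance _ H H'). Qed.

Lemma cinv_comp (C : Cat) (x y z : C) (g : chom y z) (f : chom x y) (Hg : is_iso g) (Hf : is_iso f)
  (H : is_iso (ccomp g f)) : cinv H = ccomp (cinv Hf) (cinv Hg).
Proof.
symmetry; apply: inv_uniq.
by rewrite -ccompA (ccompA (cinv Hg)) cinvL ccomp1l cinvL.
Qed.

Definition ginv (G : Gpd) (x y : G) (f : chom x y) : chom y x := cinv (gisoP f).
Lemma ginvL (G : Gpd) (x y : G) (f : chom x y) : ccomp (ginv f) f = cid x.
Proof. exact: cinvL. Qed.
Lemma ginvR (G : Gpd) (x y : G) (f : chom x y) : ccomp f (ginv f) = cid y.
Proof. exact: cinvR. Qed.
Lemma ginv_comp (G : Gpd) (x y z : G) (g : chom y z) (f : chom x y) :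
  ginv (ccomp g f) = ccomp (ginv f) (ginv g).
Proof. exact: cinv_comp. Qed.

Definition Fcomp (C D E0 : Cat) (G : Functor D E0) (F : Functor C D) : Functor C E0.
Proof.
refine {| fobj := fun x => G (F x); fmap := fun x y f => fmap G (fmap F f) |}.
- by move=> x; rewrite !fmap_id.
- by move=> x y z g f; rewrite !fmap_comp.
Defined.

Definition Fid (C : Cat) : Functor C C.
Proof.
refine {| fobj := fun x => x; fmap := fun x y f => f |} => //.
Defined.

Definition natiso (C D : Cat) (F G : Functor C D) : Prop :=
  exists th : forall x, chom (F x) (G x),
    (forall x, is_iso (th x)) /\
    (forall x y (f : chom x y), ccomp (th y) (fmap F f) = ccomp (fmap G f) (th x)).

Definition esssurj (C D : Cat) (F : Functor C D) : Prop :=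
  forall y : D, exists x : C, exists i : chom (F x) y, is_iso i.

Lemma faithful_comp (C D E0 : Cat) (G : Functor D E0) (F : Functor C D) :
  faithful F -> faithful G -> faithful (Fcomp G F).
Proof. move=> HF HG x y f g /= E; apply: HF; exact: HG. Qed.

Lemma full_comp (C D E0 : Cat) (G : Functor D E0) (F : Functor C D) :
  full F -> full G -> full (Fcomp G F).
Proof.
move=> HF HG x y h /=; have [g Eg] := HG _ _ h; have [f Ef] := HF _ _ g.
by exists f; rewrite Ef.
Qed.

Lemma esssurj_comp (C D E0 : Cat) (G : Functor D E0) (F : Functor C D) :
  esssurj F -> esssurj G -> esssurj (Fcomp G F).
Proof.
move=> HF HG z; have [y [i Hi]] := HG z; have [x [j Hj]] := HF y.
exists x, (ccomp i (fmap G j)) => /=; apply: iso_comp => //; exact: fmap_iso.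
Qed.

Lemma natiso_faithful (C D : Cat) (F G : Functor C D) :
  natiso F G -> faithful F -> faithful G.
Proof.
case=> th [Hi Hn] HF x y f g E; apply: HF.
apply: (@iso_cancell _ _ _ _ (th y)) => //; by rewrite !Hn E.
Qed.

Lemma natiso_full (C D : Cat) (F G : Functor C D) :
  natiso F G -> full F -> full G.
Proof.
case=> th [Hi Hn] HF x y h.
have [f Ef] := HF _ _ (ccomp (cinv (Hi y)) (ccomp h (th x))).
exists f; apply: (@iso_cancelr _ _ _ _ (th x)) => //.
by rewrite -Hn Ef ccompA cinvR ccomp1l.
Qed.

Lemma natiso_esssurj (C D : Cat) (F G : Functor C D) :
  natiso F G -> esssurj F -> esssurj G.
Proof.
case=> th [Hi Hn] HF y; have [x [i Hix]] := HF y.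
exists x, (ccomp i (cinv (Hi x))); apply: iso_comp => //; exact: cinv_iso.
Qed.

Lemma Fid_props (C : Cat) : faithful (Fid C) /\ full (Fid C) /\ esssurj (Fid C).
Proof.
split; [by move=> x y f g|split; [by move=> x y h; exists h|]].
move=> y; exists y, (cid y); exists (cid y); by rewrite ccomp1l.
Qed.

Section FFES.
Variables (C D : Cat) (F : Functor C D).
Hypotheses (Hfa : faithful F) (Hfu : full F) (Hes : esssurj F).

Definition Gob (y : D) : C := proj1_sig (constructive_indefinite_description _ (Hes y)).
Definition Gi_sig (y : D) := constructive_indefinite_description _
   (proj2_sig (constructive_indefinite_description _ (Hes y))).
Definition Gi (y : D) : chom (F (Gob y)) y := proj1_sig (Gi_sig y).
Lemma Gi_iso y : is_iso (Gi y).
Proof. exact: (proj2_sig (Gi_sig y)). Qed.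
Definition Giv y := cinv (Gi_iso y).
Lemma GivL y : ccomp (Giv y) (Gi y) = cid _. Proof. exact: cinvL. Qed.
Lemma GivR y : ccomp (Gi y) (Giv y) = cid _. Proof. exact: cinvR. Qed.

Definition Gmap (y y' : D) (f : chom y y') : chom (Gob y) (Gob y') :=
  proj1_sig (constructive_indefinite_description _
     (Hfu (ccomp (Giv y') (ccomp f (Gi y))))).
Lemma GmapE y y' (f : chom y y') : fmap F (Gmap f) = ccomp (Giv y') (ccomp f (Gi y)).
Proof. rewrite /Gmap; case: constructive_indefinite_description => //. Qed.

Definition Gfun : Functor D C.
Proof.
refine {| fobj := Gob; fmap := Gmap |}.
- move=> y; apply: Hfa; by rewrite GmapE fmap_id ccomp1l GivL.
- move=> x y z g f; apply: Hfa; rewrite fmap_comp !GmapE.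
  by rewrite -!ccompA (ccompA (Gi y)) GivR ccomp1l.
Defined.

Definition etam (x : C) : chom x (Gob (F x)) :=
  proj1_sig (constructive_indefinite_description _ (@Hfu x (Gob (F x)) (Giv (F x)))).
Lemma etamE x : fmap F (etam x) = Giv (F x).
Proof. rewrite /etam; case: constructive_indefinite_description => //. Qed.

Lemma ff_es_equiv : equivalence F.
Proof.
exists Gfun; split.
- exists etam; split.
  + move=> x; have [g Eg] := @Hfu (Gob (F x)) x (Gi (F x)).
    exists g; split; apply: Hfa; rewrite fmap_comp Eg etamE ?GivL ?GivR !fmap_id //.
  + move=> x y f; apply: Hfa; rewrite !fmap_comp etamE /= GmapE.
    by rewrite etamE -!ccompA GivR ccomp1r.
- exists Gi; split; first exact: Gi_iso.
  move=> x y f /=; rewrite GmapE.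
  by rewrite !ccompA GivR ccomp1l.
Qed.
End FFES.

Section Phi.
Variables (n : nat) (Phi : PFun n).

Lemma Bpred_S j (U : {set 'I_n}) : Bpred j.+1 U -> Bpred j U.
Proof. rewrite /Bpred => /andP [-> H]; exact: ltnW. Qed.

Lemma la_pi j (A : lim j Phi) U (p q : Bpred j U) : la A p = la A q.
Proof. by rewrite (eq_irrelevance p q). Qed.

Lemma lal_swap j (A : lim j Phi) U V (p1 p2 : Bpred j U) (q1 q2 : Bpred j V) (h : U \subset V) :
  ccomp (eqh (la_pi A p1 p2)) (lal A p1 q1 h) =
  ccomp (lal A p2 q2 h) (fmap (pres Phi h) (eqh (la_pi A q1 q2))).
Proof.
rewrite (eq_irrelevance p2 p1) (eq_irrelevance q2 q1).
by rewrite !eqh_id fmap_id ccomp1l ccomp1r.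
Qed.

Lemma lg_swap j (A B : lim j Phi) (f : chom A B) U (p1 p2 : Bpred j U) :
  ccomp (eqh (la_pi B p1 p2)) (lg f p1) = ccomp (lg f p2) (eqh (la_pi A p1 p2)).
Proof. by rewrite (eq_irrelevance p2 p1) !eqh_id ccomp1l ccomp1r. Qed.

Definition LHom_inv j (X Y : lim j Phi) (f : chom X Y) : chom Y X.
Proof.
refine {| lg := fun U p => ginv (lg f p) |}.
move=> U V pU pV h.
apply: (@iso_cancelr _ _ _ _ (fmap (pres Phi h) (lg f pV))); first by apply: fmap_iso; apply: gisoP.
rewrite -!ccompA -(fmap_comp (pres Phi h)) ginvL fmap_id ccomp1r.
apply: (@iso_cancell _ _ _ _ (lg f pU)); first by apply: gisoP.
by rewrite !ccompA ginvR ccomp1l (lgP f).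
Defined.

Lemma lim_iso j (X Y : lim j Phi) (f : chom X Y) : is_iso f.
Proof.
exists (LHom_inv f); split; apply: LHom_eq => U p /=; [exact: ginvL|exact: ginvR].
Qed.

Definition pswap j (X Y : lim j Phi) (E : forall U (p : Bpred j U), la X p = la Y p)
  (N : forall U V (p : Bpred j U) (q : Bpred j V) (h : U \subset V),
     ccomp (eqh (E U p)) (lal X p q h) = ccomp (lal Y p q h) (fmap (pres Phi h) (eqh (E V q)))) :
  chom X Y := {| lg := fun U p => eqh (E U p); lgP := N |}.

Section R.
Variable j : nat.

Definition Robj (A : lim j Phi) : lim j.+1 Phi.
Proof.
refine {| la := fun U pU => la A (Bpred_S pU);
          lal := fun U V pU pV h => lal A (Bpred_S pU) (Bpred_S pV) h |}.
- move=> U pU h; rewrite (lal_id A).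
  by rewrite (eq_irrelevance (Bpred_proper (Bpred_S pU)) (Bpred_proper pU)).
- move=> U V W pU pV pW hUV hVW hUW; rewrite (lal_comp A _ (Bpred_S pV) _ hUV hVW).
  by rewrite (eq_irrelevance (Bpred_proper (Bpred_S pW)) (Bpred_proper pW)).
Defined.

Definition Rhom (A B : lim j Phi) (f : chom A B) : chom (Robj A) (Robj B).
Proof.
refine {| lg := fun U pU => lg f (Bpred_S pU) : chom (la (Robj A) pU) (la (Robj B) pU) |}.
by move=> U V pU pV h; exact: (lgP f).
Defined.

Definition Rfun : Functor (lim j Phi) (lim j.+1 Phi).
Proof.
refine {| fobj := Robj; fmap := Rhom |}.
- by move=> A; apply: LHom_eq.
- by move=> A B C g f; apply: LHom_eq.
Defined.
End R.

Lemma natiso_gamma0 : natiso (Fid (lim 0 Phi)) (gamma 0 Phi).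
Proof.
exists (fun A => @pswap 0 A (gamma 0 Phi A) (fun U p => la_pi A p (Bpred_k0 p))
   (fun U V p q h => lal_swap A p (Bpred_k0 p) q (Bpred_k0 q) h)).
split; first by move=> A; apply: lim_iso.
move=> A B f; apply: LHom_eq => U p /=; exact: lg_swap.
Qed.

Lemma natiso_gammaS k :
  natiso (Fcomp (Rfun k) (gamma k Phi)) (gamma k.+1 Phi).
Proof.
exists (fun A => @pswap k.+1 (Rfun k (gamma k Phi A)) (gamma k.+1 Phi A)
   (fun U p => la_pi A (Bpred_k0 (Bpred_S p)) (Bpred_k0 p))
   (fun U V p q h => lal_swap A (Bpred_k0 (Bpred_S p)) (Bpred_k0 p)
        (Bpred_k0 (Bpred_S q)) (Bpred_k0 q) h)).
split; first by move=> A; apply: lim_iso.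
move=> A B f; apply: LHom_eq => U p /=; exact: lg_swap.
Qed.
End Phi.

Ltac nrm := repeat (rewrite ?ccomp1l ?ccomp1r ?fmap_id ?fmap_comp ?fmap_eqh -?ccompA ?eqh_compA ?eqh_comp).

Ltac eclose := repeat (apply: eqh_pi || (rewrite eqh_id ?ccomp1r ?ccomp1l) || congr ccomp).

Section Sys.
Variables (n : nat) (Phi : PFun n) (J : nat) (B : lim J Phi) (U : {set 'I_n}).

Definition goodU (X : {set 'I_n}) : bool := (U \subset X) && Bpred J X.
Definition IU := {X : {set 'I_n} | goodU X}.
Definition sv (X : IU) : {set 'I_n} := proj1_sig X.
Lemma goodS (X : IU) : U \subset sv X.
Proof. by case: X => X /= /andP []. Qed.
Lemma goodB (X : IU) : Bpred J (sv X).
Proof. by case: X => X /= /andP []. Qed.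
Definition oo (X : IU) : pobj Phi U := pres Phi (goodS X) (la B (goodB X)).
Lemma ooE (X Y : IU) (h : sv X \subset sv Y) :
  oo Y = pres Phi (goodS X) (pres Phi h (la B (goodB Y))).
Proof. by rewrite /oo (pres_comp_obj (goodS X) h (goodS Y) (Bpred_proper (goodB Y))). Qed.
Fact mm_key : unit. Proof. by []. Qed.
Definition mm_def (X Y : IU) (h : sv X \subset sv Y) : chom (oo Y) (oo X) :=
  ccomp (fmap (pres Phi (goodS X)) (lal B (goodB X) (goodB Y) h)) (eqh (ooE h)).
Definition mm (X Y : IU) (h : sv X \subset sv Y) : chom (oo Y) (oo X) := locked_with mm_key (mm_def h).

Lemma mm_pi (X Y : IU) (h h' : sv X \subset sv Y) : mm h = mm h'.
Proof. by rewrite (eq_irrelevance h h'). Qed.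

Lemma mm_id (X : IU) (h : sv X \subset sv X) : mm h = cid (oo X).
Proof.
rewrite /mm unlock /mm_def (lal_id B) hcastE; nrm; exact: eqh_id.
Qed.

Lemma mm_comp (X Y Z : IU) (hXY : sv X \subset sv Y) (hYZ : sv Y \subset sv Z) (hXZ : sv X \subset sv Z) :
  ccomp (mm hXY) (mm hYZ) = mm hXZ.
Proof.
rewrite /mm !unlock /mm_def (lal_comp B (goodB X) (goodB Y) (goodB Z) hXY hYZ hXZ) hcastE.
nrm. rewrite (pres_comp_hom (goodS X) hXY (goodS Y) (Bpred_proper (goodB Y))) hcastE.
nrm.
eclose.
Qed.


Lemma IU_eq (X Y : IU) : sv X = sv Y -> X = Y.
Proof. by case: X Y => [X pX] [Y pY] /= E; subst Y; rewrite (eq_irrelevance pX pY). Qed.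

Lemma mm_eqI (X Y : IU) (e : X = Y) (h : sv X \subset sv Y) : mm h = eqh (f_equal oo (esym e)).
Proof. by subst Y; rewrite mm_id. Qed.

Lemma proper_of_card (A : {set 'I_n}) : #|A| < n -> A \proper [set: 'I_n].
Proof. by move=> H; rewrite properEcard subsetT cardsT card_ord. Qed.

Section New.
Hypotheses (hJ : J <= #|U|.+1) (hJ' : #|U| < J) (hn3 : #|U| + 3 <= n).

Lemma good_mk (x : 'I_n) (X : {set 'I_n}) : x \notin U -> x \in X -> U \subset X -> #|X| < n -> goodU X.
Proof.
move=> hx xX UX Xn; rewrite /goodU /Bpred UX proper_of_card //=.
apply: (leq_trans hJ); have := cardsU1 x U; rewrite hx /= add1n => <-.
by apply: subset_leq_card; rewrite subUset sub1set xX UX.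
Qed.

Lemma card_U2 (x y : 'I_n) : #|x |: (y |: U)| <= #|U| + 2.
Proof. rewrite !cardsU1; move: (x \notin _) (y \notin _) => [] [] /=; set c := #|U|; lia. Qed.

Definition P1 (x : 'I_n) (hx : x \notin U) : IU.
Proof.
refine (exist _ (x |: U) _); apply: (good_mk hx); rewrite ?setU11 ?subsetUr //.
by rewrite cardsU1 hx; lia.
Defined.

Definition P2 (x y : 'I_n) (hx : x \notin U) : IU.
Proof.
refine (exist _ (x |: (y |: U)) _); apply: (good_mk hx); rewrite ?setU11 //.
- by apply: subset_trans (subsetUr _ _); apply: subsetUr.
- apply: leq_ltn_trans (card_U2 x y) _; lia.
Defined.

Lemma sub12 x y (hx : x \notin U) : sv (P1 hx) \subset sv (P2 y hx).
Proof. by rewrite /= setUS // subsetUr. Qed.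
Lemma sub12' x y (hx : x \notin U) (hy : y \notin U) : sv (P1 hy) \subset sv (P2 y hx).
Proof. exact: subsetUr. Qed.

Definition sig2 (x y : 'I_n) (hx : x \notin U) (hy : y \notin U) : chom (oo (P1 hy)) (oo (P1 hx)) :=
  ccomp (mm (sub12 y hx)) (ginv (mm (sub12' hx hy))).

Lemma P1_sub x (hx : x \notin U) (P : IU) : x \in sv P -> sv (P1 hx) \subset sv P.
Proof. by move=> xP; rewrite /= subUset sub1set xP goodS. Qed.

Lemma sig2_via x y hx hy (P : IU) (hxP : x \in sv P) (hyP : y \in sv P) :
  sig2 hx hy = ccomp (mm (P1_sub hx hxP)) (ginv (mm (P1_sub hy hyP))).
Proof.
have h2 : sv (P2 y hx) \subset sv P.
  by rewrite /= !subUset !sub1set hxP hyP goodS.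
rewrite /sig2 -(mm_comp (sub12 y hx) h2 (P1_sub hx hxP)) -(mm_comp (sub12' hx hy) h2 (P1_sub hy hyP)).
by rewrite ginv_comp -!ccompA (ccompA (mm h2)) ginvR ccomp1l.
Qed.

Lemma sig2_cocycle (hn4 : #|U| + 4 <= n) x y z hx hy hz :
  ccomp (@sig2 x y hx hy) (@sig2 y z hy hz) = sig2 hx hz.
Proof.
have gP3 : goodU (x |: (y |: (z |: U))).
  apply: (good_mk hx); rewrite ?setU11 //.
  - by do 3 apply: subset_trans (subsetUr _ _).
  - rewrite !cardsU1; move: (x \notin _) (y \notin _) (z \notin _) => [] [] [] /=; set c := #|U|; lia.
pose Q : IU := exist goodU _ gP3.
have xQ : x \in sv Q by rewrite /= setU11.
have yQ : y \in sv Q by rewrite /= setU1r // setU11.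
have zQ : z \in sv Q by rewrite /= setU1r // setU1r // setU11.
rewrite (sig2_via hx hy xQ yQ) (sig2_via hy hz yQ zQ) (sig2_via hx hz xQ zQ).
by rewrite -!ccompA (ccompA (ginv _)) ginvL ccomp1l.
Qed.

Lemma sig2_xx x (hx : x \notin U) : sig2 hx hx = cid _.
Proof. by rewrite /sig2 (mm_pi (sub12' hx hx) (sub12 x hx)) ginvR. Qed.

Lemma exU : exists x : 'I_n, x \notin U.
Proof.
have : U \proper [set: 'I_n] by apply: proper_of_card; lia.
by case/properP => _ [x _ hx]; exists x.
Qed.

Definition x0 : 'I_n := proj1_sig (sigW exU).
Lemma x0P : x0 \notin U. Proof. exact: (proj2_sig (sigW exU)). Qed.

Definition yX (X : IU) : 'I_n := odflt x0 [pick y in sv X :\: U].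
Lemma yX_in (X : IU) : yX X \in sv X :\: U.
Proof.
rewrite /yX; case: pickP => [y -> //|H] /=; exfalso.
have : sv X \subset U by apply/subsetP => y yX; apply/negPn/negP => yU; have := H y; rewrite inE yU yX.
move/subset_leq_card; have := goodB X; rewrite /Bpred => /andP [_]; lia.
Qed.
Lemma yX_notin X : yX X \notin U. Proof. by have := yX_in X; rewrite inE => /andP []. Qed.
Lemma yX_mem X : yX X \in sv X. Proof. by have := yX_in X; rewrite inE => /andP []. Qed.

Definition tau (X : IU) : chom (oo X) (oo (P1 x0P)) :=
  ccomp (sig2 x0P (yX_notin X)) (mm (P1_sub (yX_notin X) (yX_mem X))).

Lemma swap4 (hn4 : #|U| + 4 <= n) y z (hy : y \notin U) (hz : z \notin U) (Y : IU)
  (hyY : y \in sv Y) (hzY : z \in sv Y) :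
  ccomp (sig2 x0P hy) (mm (P1_sub hy hyY)) = ccomp (sig2 x0P hz) (mm (P1_sub hz hzY)).
Proof.
rewrite -(sig2_cocycle hn4 x0P hy hz) (sig2_via hy hz hyY hzY).
by rewrite -!ccompA ginvL ccomp1r.
Qed.

Lemma tau_compat (hn4 : #|U| + 4 <= n) (X Y : IU) (h : sv X \subset sv Y) :
  ccomp (tau X) (mm h) = tau Y.
Proof.
have yY : yX X \in sv Y by apply: (subsetP h); exact: yX_mem.
rewrite /tau -ccompA (mm_comp _ _ (P1_sub (yX_notin X) yY)); exact: swap4.
Qed.

Lemma tau_base (hn4 : #|U| + 4 <= n) : tau (P1 x0P) = cid _.
Proof.
rewrite /tau.
have xx : x0 \in sv (P1 x0P) by rewrite /= setU11.
rewrite (swap4 hn4 (yX_notin _) x0P (yX_mem _) xx) sig2_xx ccomp1l; exact: mm_id.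
Qed.

Lemma const_new (T : Type) (q : IU -> T) :
  (forall X Y : IU, sv X \subset sv Y -> q X = q Y) -> forall X Y, q X = q Y.
Proof.
move=> H X Y.
rewrite -(H _ _ (P1_sub (yX_notin X) (yX_mem X))) -(H _ _ (P1_sub (yX_notin Y) (yX_mem Y))).
rewrite (H _ _ (sub12 (yX Y) (yX_notin X))) -(H _ _ (sub12' (yX_notin X) (yX_notin Y))) //.
Qed.
End New.

Section Old.
Hypothesis hU : Bpred J U.
Definition Uh : IU := exist _ U (introT andP (conj (subxx U) hU)).
Lemma Uh_sub (X : IU) : sv Uh \subset sv X. Proof. exact: goodS. Qed.
Lemma const_old (T : Type) (q : IU -> T) :
  (forall X Y : IU, sv X \subset sv Y -> q X = q Y) -> forall X Y, q X = q Y.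
Proof. by move=> H X Y; rewrite -(H _ _ (Uh_sub X)) (H _ _ (Uh_sub Y)). Qed.
End Old.
End Sys.


Lemma ginv_eqh (G : Gpd) (x y : G) (e : x = y) : ginv (eqh e) = eqh (esym e).
Proof. by case: _ / e; rewrite /=; apply: (@iso_cancelr _ _ _ _ (cid x)); [apply: gisoP|rewrite ginvL ccomp1l]. Qed.

Lemma fmap_ginv (G H : Gpd) (F : Functor G H) (x y : G) (f : chom x y) :
  fmap F (ginv f) = ginv (fmap F f).
Proof. exact: fmap_cinv. Qed.

Lemma lal_pi' n (Phi : PFun n) j (A : lim j Phi) U V (p1 p2 : Bpred j U) (q1 q2 : Bpred j V) (h : U \subset V) :
  lal A p2 q2 h = ccomp (eqh (la_pi A p1 p2)) (ccomp (lal A p1 q1 h) (fmap (pres Phi h) (eqh (la_pi A q2 q1)))).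
Proof.
rewrite (eq_irrelevance p2 p1) (eq_irrelevance q2 q1).
by rewrite !eqh_id fmap_id ccomp1l ccomp1r.
Qed.

Section Lift.
Variables (n : nat) (Phi : PFun n) (J : nat) (B : lim J Phi).

Definition liftI (U V : {set 'I_n}) (hUV : U \subset V) (X : IU J V) : IU J U.
Proof.
refine (exist _ (sv X) _); apply/andP; split; last exact: goodB.
exact: subset_trans hUV (goodS X).
Defined.

Lemma liftE (U V : {set 'I_n}) (hUV : U \subset V) (X : IU J V) :
  pres Phi hUV (oo B X) = oo B (liftI hUV X).
Proof.
rewrite /oo (pres_comp_obj hUV (goodS X) (goodS (liftI hUV X)) (Bpred_proper (goodB X))).
by congr (pres _ _ _); apply: la_pi.
Qed.

Lemma Phi_mm (U V : {set 'I_n}) (hUV : U \subset V) (X Y : IU J V) (h : sv X \subset sv Y) :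
  ccomp (eqh (liftE hUV X)) (fmap (pres Phi hUV) (mm B h)) =
  ccomp (@mm n Phi J B U (liftI hUV X) (liftI hUV Y) h) (eqh (liftE hUV Y)).
Proof.
rewrite /mm !unlock /mm_def; nrm.
rewrite (pres_comp_hom hUV (goodS X) (goodS (liftI hUV X)) (Bpred_proper (goodB X))) hcastE; nrm.
rewrite (lal_pi' B (goodB X) (goodB (liftI hUV X)) (goodB Y) (goodB (liftI hUV Y))); nrm.
eclose.
Qed.

Lemma pres_idE (U : {set 'I_n}) (h : U \subset U) (pU : U \proper [set: 'I_n]) (a b : pobj Phi U)
  (f : chom a b) :
  fmap (pres Phi h) f = ccomp (eqh (esym (pres_id_obj h pU b))) (ccomp f (eqh (pres_id_obj h pU a))).
Proof. by rewrite (pres_id_hom h pU) hcastE esymK. Qed.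
End Lift.


Section Steps.
Variables (n : nat) (Phi : PFun n) (j : nat).

Lemma new_card (U : {set 'I_n}) : Bpred j U -> ~~ Bpred j.+1 U -> #|U| = j.
Proof.
rewrite /Bpred => /andP [pU c1]; rewrite pU /= -ltnNge ltnS => c2; apply/eqP.
by rewrite eqn_leq c1 c2.
Qed.

Lemma new_sub_eq (U V : {set 'I_n}) : Bpred j U -> Bpred j V -> ~~ Bpred j.+1 V ->
  U \subset V -> U = V.
Proof.
move=> pU pV nV hUV; apply/eqP; rewrite eqEcard hUV /= (new_card pV nV).
by move: pU; rewrite /Bpred => /andP [].
Qed.

Lemma id_nat (A B : lim j Phi) U (p : Bpred j U) (h : U \subset U) (c : chom (la A p) (la B p)) :
  ccomp c (lal A p p h) = ccomp (lal B p p h) (fmap (pres Phi h) c).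
Proof.
rewrite (lal_id A) (lal_id B) !hcastE (pres_idE h (Bpred_proper p)); nrm.
rewrite eqh_id ccomp1l; eclose.
Qed.

Lemma exists_up (U : {set 'I_n}) : Bpred j U -> ~~ Bpred j.+1 U -> j.+2 <= n ->
  exists2 x, x \notin U & Bpred j.+1 (x |: U).
Proof.
move=> pU nU hn; have cU := new_card pU nU.
have [x _ hx] : exists2 x, x \in [set: 'I_n] & x \notin U.
  by apply/(properP (Bpred_proper pU)).2.
exists x => //; rewrite /Bpred proper_of_card /=; rewrite ?cardsU1 hx /=; move: cU hn; set c := #|U|; lia.
Qed.

Lemma R_faithful : j.+2 <= n -> faithful (Rfun Phi j).
Proof.
move=> hn A B f g E; apply: LHom_eq => U pU.
case: (boolP (Bpred j.+1 U)) => [pU1|nU].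
- have := f_equal (fun h : chom (Rfun Phi j A) (Rfun Phi j B) => lg h pU1) E => /=.
  by rewrite (eq_irrelevance pU (Bpred_S pU1)).
- have [x hx pV] := exists_up pU nU hn.
  have hUV : U \subset x |: U by apply: subsetUr.
  have := f_equal (fun h : chom (Rfun Phi j A) (Rfun Phi j B) => lg h pV) E => /= Efg.
  apply: (@iso_cancelr _ _ _ _ (lal A pU (Bpred_S pV) hUV)); first exact: gisoP.
  by rewrite (lgP f) (lgP g) Efg.
Qed.

Lemma new_hyps (U : {set 'I_n}) : #|U| = j ->
  [/\ j.+1 <= #|U|.+1, #|U| < j.+1 & (j.+3 <= n -> #|U| + 3 <= n)].
Proof. move=> ->; split => //; lia. Qed.

Section Full.
Variables (A B : lim j Phi) (h : chom (Rfun Phi j A) (Rfun Phi j B)).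

Definition Pc U (pU : Bpred j U) (c : chom (la A pU) (la B pU)) : Prop :=
  forall V (pV : Bpred j.+1 V) (hUV : U \subset V),
    ccomp c (lal A pU (Bpred_S pV) hUV) = ccomp (lal B pU (Bpred_S pV) hUV) (fmap (pres Phi hUV) (lg h pV)).

Lemma e_compat (C : lim j Phi) U (pU : Bpred j U) (X Y : IU j.+1 U) (hXY : sv X \subset sv Y) :
  ccomp (lal C pU (Bpred_S (goodB X)) (goodS X)) (mm (Rfun Phi j C) hXY) =
  lal C pU (Bpred_S (goodB Y)) (goodS Y).
Proof.
rewrite /mm unlock /mm_def.
rewrite (lal_comp C pU (Bpred_S (goodB X)) (Bpred_S (goodB Y)) (goodS X) hXY (goodS Y)) hcastE.
nrm; eclose.
Qed.

Lemma ht_nat U (X Y : IU j.+1 U) (hXY : sv X \subset sv Y) :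
  ccomp (fmap (pres Phi (goodS X)) (lg h (goodB X))) (mm (Rfun Phi j A) hXY) =
  ccomp (mm (Rfun Phi j B) hXY) (fmap (pres Phi (goodS Y)) (lg h (goodB Y))).
Proof.
rewrite /mm !unlock /mm_def ccompA -fmap_comp (lgP h) fmap_comp.
rewrite (pres_comp_hom (goodS X) hXY (goodS Y) (Bpred_proper (goodB Y))) hcastE; nrm.
eclose.
Qed.

Lemma exists_c (hn : j.+3 <= n) U (pU : Bpred j U) : exists c, @Pc U pU c.
Proof.
case: (boolP (Bpred j.+1 U)) => [pU1|nU].
  rewrite (eq_irrelevance pU (Bpred_S pU1)); exists (lg h pU1) => V pV hUV.
  exact: (lgP h pU1 pV hUV).
have [hJ hJ' hn3] := new_hyps (new_card pU nU); have {}hn3 := hn3 hn.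
pose q (X : IU j.+1 U) : chom (la A pU) (la B pU) :=
  ccomp (lal B pU (Bpred_S (goodB X)) (goodS X))
   (ccomp (fmap (pres Phi (goodS X)) (lg h (goodB X))) (ginv (lal A pU (Bpred_S (goodB X)) (goodS X)))).
have qm : forall X Y : IU j.+1 U, sv X \subset sv Y -> q X = q Y.
  move=> X Y hXY; rewrite /q -(e_compat A pU hXY) -(e_compat B pU hXY) ginv_comp.
  rewrite -!ccompA (ccompA (mm (Rfun Phi j B) hXY)) -(ht_nat hXY) -!ccompA (ccompA (mm (Rfun Phi j A) hXY)) ginvR ccomp1l //.
have [x hx pV] := exists_up pU nU (ltnW hn).
have gV : goodU j.+1 U (x |: U) by rewrite /goodU subsetUr pV.
pose X0 : IU j.+1 U := exist (goodU j.+1 U) _ gV.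
exists (q X0) => V pV' hUV.
have gV' : goodU j.+1 U V by rewrite /goodU hUV pV'.
pose XV : IU j.+1 U := exist (goodU j.+1 U) _ gV'.
rewrite (const_new hJ hJ' hn3 qm X0 XV) /q.
rewrite (eq_irrelevance pV' (goodB XV)) (eq_irrelevance hUV (goodS XV)).
by rewrite -!ccompA ginvL ccomp1r.
Qed.

Lemma Pc_self U (pU1 : Bpred j.+1 U) (c : chom (la A (Bpred_S pU1)) (la B (Bpred_S pU1))) :
  Pc c -> c = lg h pU1.
Proof.
move=> Hc; apply: (@iso_cancelr _ _ _ _ (lal A (Bpred_S pU1) (Bpred_S pU1) (subxx U))); first exact: gisoP.
rewrite (Hc U pU1 (subxx U)); symmetry; exact: id_nat.
Qed.

Hypothesis hn : j.+3 <= n.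
Definition cf U (pU : Bpred j U) : chom (la A pU) (la B pU) :=
  proj1_sig (constructive_indefinite_description _ (exists_c hn pU)).
Lemma cfP U (pU : Bpred j U) : Pc (cf pU).
Proof. exact: (proj2_sig (constructive_indefinite_description _ (exists_c hn pU))). Qed.

Definition fext : chom A B.
Proof.
refine {| lg := cf |}.
move=> U V pU pV hUV.
case: (boolP (Bpred j.+1 V)) => [pV1|nV].
  rewrite (eq_irrelevance pV (Bpred_S pV1)) (Pc_self (cfP (Bpred_S pV1))).
  exact: cfP.
have E := new_sub_eq pU pV nV hUV; subst V.
rewrite (eq_irrelevance pV pU); exact: id_nat.
Defined.

Lemma fext_ok : fmap (Rfun Phi j) fext = h.
Proof. apply: LHom_eq => U pU1 /=; exact: Pc_self (cfP _). Qed.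
End Full.

Lemma R_full : j.+3 <= n -> full (Rfun Phi j).
Proof. move=> hn A B h; exists (fext h hn); exact: fext_ok. Qed.

End Steps.


Section Es.
Variables (n : nat) (Phi : PFun n) (j : nat) (B : lim j.+1 Phi).
Hypothesis hn : j.+4 <= n.

Lemma ex_ct U (pU : Bpred j U) : exists c : IU j.+1 U,
  exists t : (forall X : IU j.+1 U, chom (oo B X) (oo B c)),
  (forall (X Y : IU j.+1 U) (h : sv X \subset sv Y), ccomp (t X) (mm B h) = t Y) /\ t c = cid _.
Proof.
case: (boolP (Bpred j.+1 U)) => [pU1|nU].
  exists (Uh pU1), (fun X => mm B (Uh_sub pU1 X)); split; last exact: mm_id.
  by move=> X Y h; exact: mm_comp.
have cU := new_card pU nU; have [hJ hJ' hn3] := new_hyps cU.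
have {}hn3 := hn3 (ltnW hn).
have hn4 : #|U| + 4 <= n by rewrite cU; lia.
exists (P1 hJ hJ' hn3 (x0P hJ hJ' hn3)), (tau B hJ hJ' hn3); split.
- by move=> X Y h; exact: tau_compat.
- exact: tau_base.
Qed.

Definition ct_sig U (pU : Bpred j U) := constructive_indefinite_description _ (ex_ct pU).
Definition cc U (pU : Bpred j U) : IU j.+1 U := proj1_sig (ct_sig pU).
Definition tt_sig U (pU : Bpred j U) := constructive_indefinite_description _ (proj2_sig (ct_sig pU)).
Definition tt U (pU : Bpred j U) : forall X : IU j.+1 U, chom (oo B X) (oo B (cc pU)) :=
  proj1_sig (tt_sig pU).
Lemma tt_compat U (pU : Bpred j U) (X Y : IU j.+1 U) (h : sv X \subset sv Y) :
  ccomp (tt pU X) (mm B h) = tt pU Y.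
Proof. exact: (proj1 (proj2_sig (tt_sig pU))). Qed.
Lemma tt_base U (pU : Bpred j U) : tt pU (cc pU) = cid _.
Proof. exact: (proj2 (proj2_sig (tt_sig pU))). Qed.
Lemma tt_congr U (pU : Bpred j U) (X Y : IU j.+1 U) (e : X = Y) :
  tt pU X = ccomp (tt pU Y) (eqh (f_equal (@oo n Phi j.+1 B U) e)).
Proof. by subst Y; rewrite ccomp1r. Qed.
Lemma tt_iso U (pU : Bpred j U) X : is_iso (tt pU X).
Proof. exact: gisoP. Qed.

Lemma Phi_mm2 (U V : {set 'I_n}) (hUV : U \subset V) (X Y : IU j.+1 V) (h : sv X \subset sv Y)
  (h' : sv (liftI hUV X) \subset sv (liftI hUV Y)) :
  mm B h' = ccomp (eqh (liftE B hUV X)) (ccomp (fmap (pres Phi hUV) (mm B h)) (eqh (esym (liftE B hUV Y)))).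
Proof.
rewrite ccompA Phi_mm -ccompA eqh_comp eqh_id ccomp1r; exact: mm_pi.
Qed.

Lemma claimZ U V (pU : Bpred j U) (pV : Bpred j V) (pV1 : Bpred j.+1 V) (hUV : U \subset V) :
  ccomp (tt pU (liftI hUV (cc pV))) (eqh (liftE B hUV (cc pV))) =
  ccomp (tt pU (liftI hUV (Uh pV1))) (ccomp (eqh (liftE B hUV (Uh pV1))) (fmap (pres Phi hUV) (ginv (tt pV (Uh pV1))))).
Proof.
have hs : sv (liftI hUV (Uh pV1)) \subset sv (liftI hUV (cc pV)) by exact: (Uh_sub pV1 (cc pV)).
apply: (@iso_cancelr _ _ _ _ (fmap (pres Phi hUV) (tt pV (Uh pV1)))); first by apply: fmap_iso; apply: gisoP.
rewrite -!ccompA -fmap_comp ginvL fmap_id ccomp1r.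
rewrite -(tt_compat pU hs) (Phi_mm2 (Uh_sub pV1 (cc pV))); nrm.
rewrite eqh_id ccomp1l -fmap_comp.
have -> : ccomp (mm B (Uh_sub pV1 (cc pV))) (tt pV (Uh pV1)) = cid _.
  apply: (@iso_cancell _ _ _ _ (tt pV (Uh pV1))); first exact: gisoP.
  by rewrite ccompA tt_compat tt_base ccomp1l ccomp1r.
by rewrite fmap_id ccomp1r.
Qed.

Lemma KL0 U V (pU : Bpred j U) (pV : Bpred j V) (hUV : U \subset V) (X : IU j.+1 V) :
  ccomp (tt pU (liftI hUV (cc pV))) (ccomp (eqh (liftE B hUV (cc pV))) (fmap (pres Phi hUV) (tt pV X))) =
  ccomp (tt pU (liftI hUV X)) (eqh (liftE B hUV X)).
Proof.
case: (boolP (Bpred j.+1 V)) => [pV1|nV].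
  rewrite ccompA claimZ -!ccompA -fmap_comp.
  have -> : ccomp (ginv (tt pV (Uh pV1))) (tt pV X) = mm B (Uh_sub pV1 X).
    by rewrite -(tt_compat pV (Uh_sub pV1 X)) ccompA ginvL ccomp1l.
  by rewrite Phi_mm ccompA tt_compat.
have E := new_sub_eq pU pV nV hUV; subst V.
rewrite (eq_irrelevance pV pU) (pres_idE hUV (Bpred_proper pU)).
have e1 : liftI hUV (cc pU) = cc pU by apply: IU_eq.
have e2 : liftI hUV X = X by apply: IU_eq.
rewrite (tt_congr pU e1) (tt_congr pU e2) tt_base; nrm; eclose.
Qed.

Lemma KL U V (pU : Bpred j U) (pV : Bpred j V) (hUV : U \subset V) (X : IU j.+1 V)
  (Z : pobj Phi U) (f : chom Z (pres Phi hUV (oo B X))) :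
  ccomp (tt pU (liftI hUV (cc pV))) (ccomp (eqh (liftE B hUV (cc pV))) (ccomp (fmap (pres Phi hUV) (tt pV X)) f)) =
  ccomp (tt pU (liftI hUV X)) (ccomp (eqh (liftE B hUV X)) f).
Proof. by rewrite (ccompA (eqh _)) ccompA KL0 -ccompA. Qed.

Definition Aobj : lim j Phi.
Proof.
refine {| la := fun U (pU : Bpred j U) => oo B (cc pU);
          lal := fun U V (pU : Bpred j U) (pV : Bpred j V) (hUV : U \subset V) =>
            ccomp (tt pU (liftI hUV (cc pV))) (eqh (liftE B hUV (cc pV))) |}.
- move=> U pU h.
  have e1 : liftI h (cc pU) = cc pU by apply: IU_eq.
  rewrite hcastE (tt_congr pU e1) tt_base; nrm; eclose.
- move=> U V W pU pV pW hUV hVW hUW.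
  rewrite hcastE; nrm.
  rewrite KL.
  have e1 : liftI hUV (liftI hVW (cc pW)) = liftI hUW (cc pW) by apply: IU_eq.
  rewrite (tt_congr pU e1); nrm; eclose.
Defined.

Lemma ooUh U (pU1 : Bpred j.+1 U) : oo B (Uh pU1) = la B pU1.
Proof.
rewrite /oo (pres_id_obj (goodS (Uh pU1)) (Bpred_proper (goodB (Uh pU1)))); exact: la_pi.
Qed.

Definition theta : chom (Rfun Phi j Aobj) B.
Proof.
refine {| lg := fun U (pU1 : Bpred j.+1 U) =>
   (ccomp (eqh (ooUh pU1)) (ginv (tt (Bpred_S pU1) (Uh pU1))) : chom (la (Rfun Phi j Aobj) pU1) (la B pU1)) |}.
move=> U V pU1 pV1 h /=.
rewrite -!ccompA (claimZ (Bpred_S pU1) (Bpred_S pV1) pV1 h).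
rewrite !ccompA -(ccompA (eqh _)).
have hs : sv (Uh pU1) \subset sv (liftI h (Uh pV1)) by exact: h.
have -> : ccomp (ginv (tt (Bpred_S pU1) (Uh pU1))) (tt (Bpred_S pU1) (liftI h (Uh pV1))) = mm B hs.
  by rewrite -(tt_compat (Bpred_S pU1) hs) ccompA ginvL ccomp1l.
rewrite /mm unlock /mm_def (pres_idE _ (Bpred_proper pU1)).
rewrite (lal_pi' B pU1 (goodB (Uh pU1)) pV1 (goodB (liftI h (Uh pV1)))).
rewrite (eq_irrelevance hs h).
nrm; eclose.
Qed.
End Es.

Lemma R_es n (Phi : PFun n) j : j.+4 <= n -> esssurj (Rfun Phi j).
Proof.
move=> hn B; exists (Aobj B hn), (theta B hn); exact: lim_iso.
Qed.

Lemma gamma_props n (Phi : PFun n) k : k < n ->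
  faithful (gamma k Phi) /\ (k.+2 <= n -> full (gamma k Phi)) /\ (k.+3 <= n -> esssurj (gamma k Phi)).
Proof.
elim: k => [|k IH] hk.
  have [F1 [F2 F3]] := Fid_props (lim 0 Phi).
  split; first exact: natiso_faithful (natiso_gamma0 Phi) F1.
  split=> _; [exact: natiso_full (natiso_gamma0 Phi) F2|exact: natiso_esssurj (natiso_gamma0 Phi) F3].
have [I1 [I2 I3]] := IH (ltnW hk).
split; first exact: natiso_faithful (natiso_gammaS Phi k) (faithful_comp I1 (@R_faithful n Phi k hk)).
split=> hk'.
- apply: natiso_full (natiso_gammaS Phi k) (full_comp (I2 (ltnW hk')) (@R_full n Phi k hk')).
- apply: natiso_esssurj (natiso_gammaS Phi k) (esssurj_comp (I3 (ltnW hk')) (@R_es n Phi k hk')).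
Qed.

Theorem proposition5p1 (n k : nat) (Phi : PFun n) :
  k < n ->
  faithful (gamma k Phi) /\
  (k + 2 <= n -> full (gamma k Phi) /\ faithful (gamma k Phi)) /\
  (k + 3 <= n -> equivalence (gamma k Phi)).
Proof.
move=> hk; have [H1 [H2 H3]] := gamma_props Phi hk.
split => //; split.
- by move=> h2; split => //; apply: H2; rewrite -addn2.
- move=> h3; apply: ff_es_equiv => //; [apply: H2; lia|apply: H3; lia].
Qed.
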